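(* (i) The Hamming distance $d$ is an integer-valued metric on $\mathscr P$. (ii) For all $\lambda,\mu\in\mathscr P$, $d(\lambda,\mu)=\frac12|S_\lambda\,\Delta\,S_\mu|$. (iii) If $|\lambda|=|\mu|$, then $d(\lambda,\mu)\ne1$. (iv) For every integer $k\ge0$, if $d(\lambda,\mu)=2k$, then $|S_\lambda\setminus S_\mu|=2k=|S_\mu\setminus S_\lambda|$.
   Context: $\mathscr P$ is the set of all integer partitions, $|\lambda|$ the size, $\lambda'$ the transpose. Modified Frobenius coordinates: if $d$ is the number of $i\ge1$ with $\lambda_i\ge i$, put $c_i=\lambda_i-i+\frac12$ and $c_i^*=-(\lambda'_i-i)-\frac12$ for $i=1,\dots,d$, and $C_\lambda=\{c_1,\dots,c_d,c_1^*,\dots,c_d^*\}\subset\mathbb Z+\frac12$. The Hamming distance is $d(\lambda,\mu)=\frac12|C_\lambda\,\Delta\,C_\mu|$, where $X\,\Delta\,Y=(X\cup Y)\setminus(X\cap Y)$. Also $S_\lambda=\{\lambda_j-j+\frac12: j\ge1\}$ (with $\lambda_j=0$ for $j$ larger than the length). *)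

(* Defs.v *)
From HB Require Import structures.
From mathcomp Require Import all_boot all_order all_algebra.
From mathcomp Require Import finmap.
Set Implicit Arguments. Unset Strict Implicit. Unset Printing Implicit Defensive.
Import Order.TTheory GRing.Theory Num.Theory.
Local Open Scope ring_scope.
Local Open Scope fset_scope.

(* A partition is a finite weakly decreasing sequence of positive naturals
   lambda = [:: lambda_1; lambda_2; ...]; this representation is unique. *)
Definition is_partition (l : seq nat) : bool :=
  sorted geq l && all (fun x => 0 < x)%N l.

(* lambda_i for i >= 1 (0 beyond the length) *)
Definition part (l : seq nat) (i : nat) : nat := nth 0%N l i.-1.

Definition conjp (l : seq nat) (i : nat) : nat := count (fun x => i <= x)%N l.

Definition psize (l : seq nat) : nat := sumn l.

(* d = number of i >= 1 with lambda_i >= i (all such i are <= length) *)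
Definition durfee (l : seq nat) : nat :=
  count (fun i => i <= part l i)%N (iota 1 (size l)).

Definition frob_c (l : seq nat) (i : nat) : rat :=
  (((part l i)%:Z - i%:Z)%:~R + 1 / 2)%R.
Definition frob_cstar (l : seq nat) (i : nat) : rat :=
  (- ((conjp l i)%:Z - i%:Z)%:~R - 1 / 2)%R.

Definition Cset (l : seq nat) : {fset rat} :=
  [fset frob_c l i | i in iota 1 (durfee l)]
  `|` [fset frob_cstar l i | i in iota 1 (durfee l)].

Definition hamming (l m : seq nat) : rat :=
  ((#|` (Cset l `\` Cset m) `|` (Cset m `\` Cset l)|)%:R / 2)%R.

Definition Sset (l : seq nat) (x : rat) : Prop :=
  exists2 j : nat, (1 <= j)%N & x = (((part l j)%:Z - j%:Z)%:~R + 1 / 2)%R.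

Definition has_card (P : rat -> Prop) (n : nat) : Prop :=
  exists s : seq rat, uniq s /\ size s = n /\ (forall x, P x <-> x \in s).

(* Main.v *)
Require Import Defs.
From HB Require Import structures.
From mathcomp Require Import all_boot all_order all_algebra.
From mathcomp Require Import finmap.
From mathcomp Require Import zify ring lra.
Import Order.TTheory GRing.Theory Num.Theory.
Local Open Scope ring_scope.

Module Aux.
Local Open Scope ring_scope.

Lemma geq_trans : transitive geq.
Proof. by move=> y x z /= h1 h2; apply: leq_trans h2 h1. Qed.

Lemma nth_mono (l : seq nat) : sorted geq l ->
  forall i j, (i <= j)%N -> (nth 0%N l j <= nth 0%N l i)%N.
Proof.
move=> sl i j ij; case: (ltnP j (size l)) => hj.
  have hi : (i < size l)%N by apply: leq_ltn_trans hj.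
  exact: (sorted_leq_nth geq_trans (@leqnn) 0 sl).
by rewrite nth_default.
Qed.

Lemma K (l : seq nat) (i : nat) : sorted geq l -> (0 < i)%N ->
  forall k, (k < conjp l i)%N = (i <= nth 0%N l k)%N.
Proof.
move=> + i0; rewrite /conjp; elim: l => [|x l IH] srt k /=.
  by rewrite nth_nil ltn0 leqn0 gtn_eqF.
have srt' : sorted geq l := path_sorted srt.
have allx : all (fun y => y <= x)%N l.
  by have := order_path_min geq_trans srt.
case: (leqP i x) => hx.
  case: k => [|k] //=; by rewrite add1n ltnS IH.
have c0 : count (fun x0 => (i <= x0)%N) l = 0%N.
  apply/eqP; rewrite -leqn0 leqNgt -has_count -all_predC.
  apply: sub_all allx => y /= hy; rewrite -ltnNge; exact: leq_ltn_trans hy hx.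
rewrite c0 ltn0; case: k => [|k] /=; first by rewrite leqNgt hx.
case: (ltnP k (size l)) => hk.
  have := all_nthP 0 allx k hk => hy.
  apply/esym/negbTE; rewrite -ltnNge; exact: leq_ltn_trans hy hx.
by rewrite nth_default // leqn0 gtn_eqF.
Qed.

Lemma count_down (P : pred nat) : (forall i j, (0 < i <= j)%N -> P j -> P i) ->
  forall n i, (0 < i <= n)%N -> P i = (i <= count P (iota 1 n))%N.
Proof.
move=> Pd; elim=> [|n IH] i /andP[i0 iN]; first by lia.
rewrite (_ : iota 1 n.+1 = iota 1 n ++ [:: n.+1]); last first.
  by rewrite -[n.+1]addn1 (iotaD 1 n 1) add1n addn1.
rewrite count_cat /= addn0.
have cn : (count P (iota 1 n) <= n)%N by rewrite -{2}(size_iota 1 n) count_size.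
case Pn: (P n.+1) => /=.
  have -> : count P (iota 1 n) = n.
    case: n IH cn Pn {iN} => [|n] IH cn Pn; first by apply/eqP; rewrite -leqn0.
    apply/eqP; rewrite eqn_leq cn -IH ?leqnn //=; exact: (Pd n.+1 n.+2 (leqnSn _) Pn).
  rewrite addn1 iN; apply: (Pd i n.+1) => //; by rewrite i0 iN.
rewrite /nat_of_bool addn0;  case: (ltnP i n.+1) => hi; first by rewrite IH // i0.
have -> : i = n.+1 by lia.
rewrite Pn; apply/esym/negbTE; rewrite -ltnNge ltnS //.
Qed.

Local Open Scope ring_scope.

Arguments nth_mono {l}.
Arguments K {l i}.

Definition Aset (l : seq nat) (z : int) : Prop :=
  exists2 j : nat, (1 <= j)%N & z = (part l j)%:Z - j%:Z.

Lemma durfeeP (l : seq nat) : sorted geq l -> forall i, (0 < i)%N ->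
  (i <= durfee l)%N = (i <= part l i)%N.
Proof.
move=> sl i i0.
have Pd : forall i j, (0 < i <= j)%N -> (j <= part l j)%N -> (i <= part l i)%N.
  move=> a b /andP[a0 ab] hb; rewrite /part in hb *.
  have h : (a.-1 <= b.-1)%N by lia.
  have := nth_mono sl _ _ h; lia.
case: (leqP i (size l)) => hi.
  by rewrite /durfee -(count_down (fun i => (i <= part l i)%N) Pd) ?i0.
have -> : part l i = 0%N by rewrite /part nth_default //; lia.
have : (durfee l <= size l)%N by rewrite /durfee -{2}(size_iota 1 (size l)) count_size.
lia.
Qed.

Lemma conjP (l : seq nat) : sorted geq l -> forall i, (0 < i)%N ->
  (i <= conjp l i)%N = (i <= part l i)%N.
Proof. move=> sl i i0; rewrite /part -(K sl i0); lia. Qed.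

Lemma L1 (l : seq nat) : sorted geq l -> forall i j, (0 < i)%N -> (0 < j)%N ->
  (part l j)%:Z - j%:Z <> i%:Z - 1 - (conjp l i)%:Z.
Proof.
move=> sl i j i0 j0; have := K sl i0 j.-1; rewrite /part.
case: (leqP i (nth 0%N l j.-1)) => h1 h2.
  move: h2 => /idP h2; lia.
move: h2 => /negbT h2; lia.
Qed.

Lemma L2 (l : seq nat) : sorted geq l -> forall z : int,
  Aset l z \/ exists2 i : nat, (0 < i)%N & z = i%:Z - 1 - (conjp l i)%:Z.
Proof.
move=> sl z.
have constr : forall j : nat, (0 < j)%N -> (part l j)%:Z - j%:Z < z ->
    (j = 1%N \/ z < (part l j.-1)%:Z - (j.-1)%:Z) ->
    exists2 i : nat, (0 < i)%N & z = i%:Z - 1 - (conjp l i)%:Z.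
  move=> j j0 hj hj1.
  have hi : 0 <= z + j%:Z by lia.
  exists (absz (z + j%:Z)%R); first by lia.
  have ei : ((absz (z + j%:Z)%R))%:Z = z + j%:Z by rewrite gez0_abs.
  have i0 : (0 < (absz (z + j%:Z)%R))%N by lia.
  have k1 := K sl i0 j.-1.
  have : (conjp l (absz (z + j%:Z)%R) <= j.-1)%N.
    by rewrite leqNgt k1 -ltnNge; move: hj; rewrite /part; lia.
  have : (j.-1 <= conjp l (absz (z + j%:Z)%R))%N.
    case: hj1 => [-> //|hj1].
    have k2 := K sl i0 j.-2.
    have h3 : ((absz (z + j%:Z)%R) <= nth 0%N l j.-2)%N.
      by move: hj1; rewrite /part; lia.
    rewrite h3 in k2; lia.
  lia.
have main : forall n : nat, (part l n.+1)%:Z - (n.+1)%:Z <= z ->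
    Aset l z \/ exists2 i : nat, (0 < i)%N & z = i%:Z - 1 - (conjp l i)%:Z.
  elim=> [|n IH] hn.
    case: (ltrgtP ((part l 1)%:Z - 1%:Z) z) => h.
    - by right; apply: (constr 1%N) => //; left.
    - lia.
    - by left; exists 1%N.
  case: (ltrgtP ((part l n.+2)%:Z - (n.+2)%:Z) z) => h.
  - case: (lerP ((part l n.+1)%:Z - (n.+1)%:Z) z) => h'; first exact: IH.
    by right; apply: (constr n.+2) => //; right.
  - lia.
  - by left; exists n.+2.
apply: (main (size l + absz z%R)%N).
have -> : part l (size l + `|z|).+1 = 0%N by rewrite /part nth_default //= leq_addr.
lia.
Qed.

Local Open Scope ring_scope.

Arguments durfeeP {l}.
Arguments conjP {l}.
Arguments L1 {l}.
Arguments L2 {l}.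

Definition hz (z : int) : rat := (z%:~R + 1 / 2)%R.

Lemma hz_inj : injective hz.
Proof. by move=> a b; rewrite /hz => /addIr /intr_inj. Qed.

Lemma frob_cE l i : frob_c l i = hz ((part l i)%:Z - i%:Z).
Proof. by []. Qed.

Lemma frob_cstarE l i : frob_cstar l i = hz (i%:Z - 1 - (conjp l i)%:Z).
Proof.
rewrite /frob_cstar /hz !intrD !intrN /=.
rewrite (_ : (1%:~R : rat) = 1) //. lra.
Qed.

Definition M (l : seq nat) (N : nat) : seq int :=
  [seq (nth 0%N l k)%:Z - (k.+1)%:Z | k <- iota 0 N].

Definition Bm (l : seq nat) (N : nat) (z : int) : bool :=
  (z < - N%:Z) || (z \in M l N).

Lemma M_ge l N z : z \in M l N -> - N%:Z <= z.
Proof. by case/mapP => k; rewrite mem_iota => /andP[_ hk] ->; lia. Qed.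

Lemma AB l N z : (size l <= N)%N -> Aset l z <-> Bm l N z.
Proof.
move=> hN; split.
  case=> j j1 ->; rewrite /Bm /part.
  case: (leqP j N) => hj.
    apply/orP; right; apply/mapP; exists j.-1; first by rewrite mem_iota; lia.
    by rewrite prednK.
  rewrite nth_default; last by lia.
  apply/orP; left; lia.
case/orP => [hz|].
  exists (absz z%R); first by lia.
  rewrite /part nth_default; last by lia.
  lia.
case/mapP => k; rewrite mem_iota => /andP[_ hk] ->.
by exists k.+1.
Qed.

Local Open Scope fset_scope.
Local Open Scope ring_scope.

Lemma CsetP l x : reflect
  (exists2 i : nat, (0 < i <= durfee l)%N &
     x = hz ((part l i)%:Z - i%:Z) \/ x = hz (i%:Z - 1 - (conjp l i)%:Z))
  (x \in Cset l).
Proof.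
rewrite /Cset in_fsetU; apply: (iffP orP).
  case=> /imfsetP [i /=]; rewrite mem_iota => hi ->; exists i; try lia.
    by left.
  by right; rewrite frob_cstarE.
case=> i hi [->|->]; [left|right]; apply/imfsetP; exists i => /=;
  rewrite ?mem_iota ?frob_cstarE //; lia.
Qed.

Lemma Cform l x : x \in Cset l -> exists z, x = hz z.
Proof. by case/CsetP => i _ [->|->]; eexists. Qed.

Lemma memC l N z : sorted geq l -> (size l <= N)%N ->
  (hz z \in Cset l) = (if 0 <= z then Bm l N z else ~~ Bm l N z).
Proof.
move=> sl hN.
have dP := durfeeP sl; have cP := conjP sl.
case: ifP => z0.
  apply/idP/idP.
    case/CsetP => i hi [/hz_inj ->|/hz_inj ez].
      by apply/(AB _ _ _ hN); exists i => //; lia.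
    have := dP i; have := cP i; lia.
  move/(AB _ _ _ hN) => [j j1 ez]; apply/CsetP; exists j; last by left; rewrite ez.
  have := dP j; lia.
apply/idP/idP.
  case/CsetP => i hi [/hz_inj ez|/hz_inj ez].
    have := dP i; lia.
  apply/negP => /(AB _ _ _ hN) [j j1 ez']; apply: (L1 sl i j); lia.
move=> nB; case: (L2 sl z) => [/(AB _ _ _ hN) hB|[i i0 ez]]; first by rewrite hB in nB.
apply/CsetP; exists i; last by right; rewrite ez.
have := dP i; have := cP i; lia.
Qed.

Local Open Scope fset_scope.
Local Open Scope ring_scope.

Arguments nth_mono {l}.

Definition s1 l m N : seq int := [seq z <- M l N | z \notin M m N].

Definition Dset l m := (Cset l `\` Cset m) `|` (Cset m `\` Cset l).

Lemma hammingE l m : hamming l m = (#|` Dset l m|)%:R / 2.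
Proof. by []. Qed.

Lemma Dmem_hz l m N z : sorted geq l -> sorted geq m ->
  (size l <= N)%N -> (size m <= N)%N ->
  (hz z \in Dset l m) = (z \in s1 l m N ++ s1 m l N).
Proof.
move=> sl sm hl hm.
rewrite /Dset in_fsetU !in_fsetD !(memC _ N) // mem_cat !mem_filter /Bm.
case: (boolP (z < - N%:Z)) => hz /=.
  have h1 : z \notin M l N by apply/negP => /M_ge; lia.
  have h2 : z \notin M m N by apply/negP => /M_ge; lia.
  by rewrite (negbTE h1) (negbTE h2); case: ifP.
by case: (0 <= z); case: (z \in M l N); case: (z \in M m N).
Qed.

Lemma Dmem l m N x : sorted geq l -> sorted geq m ->
  (size l <= N)%N -> (size m <= N)%N ->
  (x \in Dset l m) = (x \in map hz (s1 l m N ++ s1 m l N)).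
Proof.
move=> sl sm hl hm; apply/idP/idP.
  move=> hx.
  have : x \in Cset l `|` Cset m.
    move: hx; rewrite /Dset in_fsetU !in_fsetD => /orP[/andP[_ h]|/andP[_ h]].
      by rewrite in_fsetU h. by rewrite in_fsetU h orbT.
  by rewrite in_fsetU => /orP [] /Cform [z ez]; subst x; rewrite (mem_map hz_inj) -(Dmem_hz _ _ N).
by case/mapP => z hzin ->; rewrite (Dmem_hz _ _ N).
Qed.

Lemma M_sorted l N : sorted geq l -> sorted (fun a b : int => b < a) (M l N).
Proof.
move=> sl; rewrite sorted_map.
apply: (sub_sorted _ (iota_ltn_sorted 0 N)) => i j /= hij.
have := nth_mono sl i j (ltnW hij); lia.
Qed.

Lemma M_uniq l N : sorted geq l -> uniq (M l N).
Proof.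
move=> sl; apply: (sorted_uniq _ _ (M_sorted _ N sl)).
  move=> a b c /= h1 h2; lia.
move=> a /=; lia.
Qed.

Lemma size_M l N : size (M l N) = N.
Proof. by rewrite size_map size_iota. Qed.

Lemma size_s1 l m N : sorted geq l -> sorted geq m ->
  size (s1 l m N) = size (s1 m l N).
Proof.
move=> sl sm.
have e1 : (count (fun z => z \in M m N) (M l N) + count (fun z => z \notin M m N) (M l N) = N)%N.
  by rewrite -[in RHS](size_M l N); exact: count_predC.
have e2 : (count (fun z => z \in M l N) (M m N) + count (fun z => z \notin M l N) (M m N) = N)%N.
  by rewrite -[in RHS](size_M m N); exact: count_predC.
have e3 : count (fun z => z \in M m N) (M l N) = count (fun z => z \in M l N) (M m N).
  rewrite -!size_filter; apply: perm_size; apply: uniq_perm;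
    rewrite ?filter_uniq ?M_uniq //.
  by move=> z; rewrite !mem_filter andbC.
rewrite /s1 !size_filter.
rewrite -(addKn (count (fun z => z \in M m N) (M l N)) (count _ (M l N))) e1.
rewrite -(addKn (count (fun z => z \in M l N) (M m N)) (count _ (M m N))) e2.
by rewrite e3.
Qed.

Lemma s1_uniq l m N : sorted geq l -> sorted geq m -> uniq (s1 l m N ++ s1 m l N).
Proof.
move=> sl sm; rewrite cat_uniq !filter_uniq ?M_uniq //= andbT.
apply/hasPn => z; rewrite !mem_filter => /andP[h1 h2]; by rewrite h2.
Qed.

Lemma cardD l m N : sorted geq l -> sorted geq m ->
  (size l <= N)%N -> (size m <= N)%N ->
  #|` Dset l m| = (size (s1 l m N) + size (s1 m l N))%N.
Proof.
move=> sl sm hl hm.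
rewrite -size_cat -(size_map hz); apply: perm_size; apply: uniq_perm.
- exact: fset_uniq.
- by rewrite map_inj_uniq ?s1_uniq //; exact: hz_inj.
by move=> x; rewrite -(Dmem _ _ N).
Qed.

Lemma SsetE l z : Sset l (hz z) <-> Aset l z.
Proof.
split; case=> j j1 e; exists j => //.
  exact: hz_inj.
by rewrite e.
Qed.

Lemma Sform l x : Sset l x -> exists z, x = hz z.
Proof. by case=> j _ ->; eexists. Qed.

Lemma Sxor l m N x : (size l <= N)%N -> (size m <= N)%N ->
  (Sset l x /\ ~ Sset m x) <-> x \in map hz (s1 l m N).
Proof.
move=> hl hm; split.
  case=> hS hnS; case: (Sform _ _ hS) => z ez; subst x.
  rewrite mem_map; last exact: hz_inj.
  move/SsetE/(AB _ _ _ hl): hS; rewrite /Bm mem_filter => /orP[h|->].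
    by exfalso; apply: hnS; apply/SsetE/(AB _ _ _ hm); rewrite /Bm h.
  rewrite andbT; apply/negP => h; apply: hnS; apply/SsetE/(AB _ _ _ hm).
  by rewrite /Bm h orbT.
case/mapP => z; rewrite mem_filter => /andP[h1 h2] ->; split.
  by apply/SsetE/(AB _ _ _ hl); rewrite /Bm h2 orbT.
move/SsetE/(AB _ _ _ hm); rewrite /Bm (negbTE h1) orbF.
by move/M_ge: h2; lia.
Qed.

Local Open Scope fset_scope.
Local Open Scope ring_scope.

Lemma sumnth (l : seq nat) N : (size l <= N)%N ->
  (\sum_(k <- iota 0 N) nth 0%N l k)%N = sumn l.
Proof.
elim: l N => [|x l IH] N hN.
  by rewrite big1 // => k _; rewrite nth_nil.
case: N hN => [//|N] hN.
rewrite /= big_cons /= -[1%N]/(1 + 0)%N iotaDl big_map.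
by rewrite -(IH N).

Qed.

Lemma sumM l N : (size l <= N)%N ->
  \sum_(z <- M l N) z = (psize l)%:Z - \sum_(k <- iota 0 N) (k.+1)%:Z.
Proof.
move=> hN; rewrite big_map sumrB; congr (_ - _).
rewrite -(big_morph Posz PoszD (erefl 0%:Z)).
by rewrite sumnth.
Qed.

Lemma sum_split l m N :
  \sum_(z <- M l N) z = \sum_(z <- [seq z <- M l N | z \in M m N]) z + \sum_(z <- s1 l m N) z.
Proof.
by rewrite /s1 !big_filter (bigID (fun z => z \in M m N)).
Qed.

Lemma fset_tri (A B C : {fset rat}) :
  (#|` (A `\` C) `|` (C `\` A)| <= #|` (A `\` B) `|` (B `\` A)| + #|` (B `\` C) `|` (C `\` B)|)%N.
Proof.
apply: leq_trans (leq_card_fsetU _ _).1.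
apply: fsubset_leq_card; apply/fsubsetP => x.
rewrite !in_fsetU !in_fsetD.
by case: (x \in A); case: (x \in B); case: (x \in C).
Qed.

Lemma posnth l : is_partition l -> forall k, (k < size l)%N = (0 < nth 0%N l k)%N.
Proof.
case/andP => _ /allP hp k; case: (ltnP k (size l)) => hk.
  by rewrite hp // mem_nth.
by rewrite nth_default.
Qed.

Lemma hc l m N : sorted geq l -> (size l <= N)%N -> (size m <= N)%N ->
  has_card (fun x => Sset l x /\ ~ Sset m x) (size (s1 l m N)).
Proof.
move=> sl hl hm; exists (map hz (s1 l m N)); split; last split.
- by rewrite map_inj_uniq ?filter_uniq ?M_uniq //; exact: hz_inj.
- by rewrite size_map.
by move=> x; apply: Sxor.
Qed.

End Aux.
Import Aux.

Local Open Scope ring_scope.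

Lemma hamE l m : is_partition l -> is_partition m ->
  hamming l m = (size (s1 l m (size l + size m)))%:R.
Proof.
move=> /andP[sl _] /andP[sm _].
rewrite hammingE (cardD _ _ (size l + size m)) ?leq_addr ?leq_addl //.
rewrite (size_s1 l m) // natrD; lra.
Qed.

Lemma ham0 l m : is_partition l -> is_partition m -> hamming l m = 0 -> l = m.
Proof.
move=> pl pm; rewrite hamE //.
move: (pl) (pm) => /andP[sl _] /andP[sm _].
set N := (size l + size m)%N.
have hl : (size l <= N)%N by rewrite leq_addr.
have hm : (size m <= N)%N by rewrite leq_addl.
move/eqP; rewrite pnatr_eq0 size_eq0 => /eqP e1.
have e2 : s1 m l N = [::] by apply/eqP; rewrite -size_eq0 -(size_s1 l m) // e1.
have EM : M l N = M m N.
  apply: (irr_sorted_eq (leT := fun a b : int => b < a)).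
  - move=> a b c /= h1 h2; lia.
  - move=> a /=; lia.
  - exact: M_sorted.
  - exact: M_sorted.
  move=> z; apply/idP/idP => hz.
    apply/negPn/negP => hn.
    have : z \in s1 l m N by rewrite mem_filter hn hz.
    by rewrite e1.
  apply/negPn/negP => hn.
  have : z \in s1 m l N by rewrite mem_filter hn hz.
  by rewrite e2.
have En : forall k, nth 0%N l k = nth 0%N m k.
  move=> k; case: (ltnP k N) => hk.
    have := congr1 (fun s => nth 0 s k) EM.
    rewrite /M !(nth_map 0%N) ?size_iota // nth_iota // add0n.
    lia.
  by rewrite !nth_default //; apply: leq_trans hk.
have Hs : forall k, (k < size l)%N = (k < size m)%N.
  by move=> k; rewrite (posnth _ pl) (posnth _ pm) En.
have es : size l = size m.
  have := Hs (size l); have := Hs (size m); rewrite !ltnn; lia.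
apply: (eq_from_nth es) => k _; exact: En.
Qed.

Theorem lemma6 :
  (* (i) integer-valued metric on partitions *)
  ((forall l m, is_partition l -> is_partition m ->
      exists n : nat, hamming l m = n%:R)
   /\ (forall l m, is_partition l -> is_partition m ->
      (hamming l m = 0 <-> l = m))
   /\ (forall l m, is_partition l -> is_partition m ->
      hamming l m = hamming m l)
   /\ (forall l m p, is_partition l -> is_partition m -> is_partition p ->
      hamming l p <= hamming l m + hamming m p))
  (* (ii) *)
  /\ (forall l m, is_partition l -> is_partition m ->
      exists2 N : nat,
        has_card (fun x => (Sset l x /\ ~ Sset m x) \/ (Sset m x /\ ~ Sset l x)) N
        & hamming l m = N%:R / 2)
  (* (iii) *)
  /\ (forall l m, is_partition l -> is_partition m ->
      psize l = psize m -> hamming l m <> 1)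
  (* (iv) *)
  /\ (forall (k : nat) l m, is_partition l -> is_partition m ->
      hamming l m = (2 * k)%N%:R ->
      has_card (fun x => Sset l x /\ ~ Sset m x) (2 * k)
      /\ has_card (fun x => Sset m x /\ ~ Sset l x) (2 * k)).
Proof.
split; [split; [|split; [|split]]|split; [|split]].
- move=> l m pl pm; eexists; exact: hamE.
- move=> l m pl pm; split; first exact: ham0.
  move=> <-; rewrite hammingE /Dset fsetDv fsetU0 cardfs0; lra.
- by move=> l m _ _; rewrite !hammingE /Dset fsetUC.
- move=> l m p _ _ _; rewrite !hammingE /Dset.
  have := fset_tri (Cset l) (Cset m) (Cset p).
  rewrite -(ler_nat rat) natrD; lra.
- move=> l m pl pm.
  move: (pl) (pm) => /andP[sl _] /andP[sm _].
  set N := (size l + size m)%N.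
  have hl : (size l <= N)%N by rewrite leq_addr.
  have hm : (size m <= N)%N by rewrite leq_addl.
  exists (size (s1 l m N ++ s1 m l N)); last by rewrite hammingE (cardD _ _ N) // size_cat.
  exists (map hz (s1 l m N ++ s1 m l N)); split; last split.
  + by rewrite map_inj_uniq ?s1_uniq //; exact: hz_inj.
  + by rewrite size_map.
  move=> x; rewrite map_cat mem_cat; split.
    by case=> [/(Sxor _ _ _ _ hl hm) h|/(Sxor _ _ _ _ hm hl) h]; rewrite h ?orbT.
  by case/orP => [/(Sxor _ _ _ _ hl hm) | /(Sxor _ _ _ _ hm hl)]; [left|right].
- move=> l m pl pm eP h1.
  move: (pl) (pm) => /andP[sl _] /andP[sm _].
  set N := (size l + size m)%N.
  have hl : (size l <= N)%N by rewrite leq_addr.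
  have hm : (size m <= N)%N by rewrite leq_addl.
  move: h1; rewrite hammingE (cardD _ _ N) // (size_s1 l m) //.
  move=> h; have {h} : size (s1 m l N) = 1%N.
    by apply/eqP; rewrite -(pnatr_eq1 rat); apply/eqP; move: h; rewrite natrD; lra.
  move=> h; have h' : size (s1 l m N) = 1%N by rewrite (size_s1 l m).
  case E1: (s1 l m N) h' => [|x [|]] // _.
  case E2: (s1 m l N) h => [|y [|]] // _.
  have Sl := sum_split l m N; have Sm := sum_split m l N.
  rewrite E1 big_seq1 sumM // in Sl; rewrite E2 big_seq1 sumM // in Sm.
  have PI : \sum_(z <- [seq z <- M l N | z \in M m N]) z = \sum_(z <- [seq z <- M m N | z \in M l N]) z.
    apply: perm_big; apply: uniq_perm; rewrite ?filter_uniq ?M_uniq //.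
    by move=> z; rewrite !mem_filter andbC.
  have exy : x = y by rewrite eP in Sl; lra.
  have : x \in s1 l m N by rewrite E1 mem_seq1.
  have : y \in s1 m l N by rewrite E2 mem_seq1.
  rewrite !mem_filter exy => /andP[_ h2] /andP[h3 _].
  by rewrite h2 in h3.
- move=> k l m pl pm h.
  move: (pl) (pm) => /andP[sl _] /andP[sm _].
  set N := (size l + size m)%N.
  have hl : (size l <= N)%N by rewrite leq_addr.
  have hm : (size m <= N)%N by rewrite leq_addl.
  move: h; rewrite hammingE (cardD _ _ N) // (size_s1 l m) // => h.
  have e : size (s1 m l N) = (2 * k)%N.
    have : (size (s1 m l N) + size (s1 m l N))%N = (4 * k)%N.
      have h2 : ((size (s1 m l N) + size (s1 m l N))%N%:R : rat) = (4 * k)%N%:R.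
        rewrite natrD natrM; move: h; rewrite natrD natrM; lra.
      by apply/eqP; rewrite -(eqr_nat rat) h2.
    lia.
  split.
    by rewrite -e -(size_s1 l m) //; apply: hc.
  by rewrite -e; apply: hc; rewrite // addnC.
Qed.
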